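(* Let $W_1,\dots,W_m\in\mathbb{R}^{n\times n}$ be eventually doubly stochastic signed adjacency matrices, let $Q\in\mathbb{R}^{(n-1)\times n}$ satisfy $QQ^\top=I_{n-1}$, $Q\mathbf{1}=0$, fix an integer $r\ge1$, and set $\hat W_k=W_k\otimes\cdots\otimes W_k$ and $\hat Q=Q\otimes\cdots\otimes Q$ ($r$-fold Kronecker products). If there exists a symmetric positive definite $\hat P\in\mathbb{R}^{n^r\times n^r}$ such that \[ \hat Q\hat W_k^\top\hat P\hat W_k\hat Q^\top-\hat Q\hat P\hat Q^\top\prec0\quad\text{for all }k=1,\dots,m, \] then $\{W_1,\dots,W_m\}$ is a consensus set for the switched system $\mathbf{x}(t+1)=W_{\sigma(t)}\mathbf{x}(t)$.
   Context: $W_k$ are real matrices (entries of any sign). $W$ is eventually positive if there is $t_0\in\mathbb{Z}_{\ge0}$ with $W^t$ entrywise positive for all integers $t\ge t_0$; eventually doubly stochastic means eventually positive with $W\mathbf{1}=W^\top\mathbf{1}=\mathbf{1}$. $X\prec0$ means symmetric negative definite. A switching signal is any map $\sigma:\mathbb{Z}_{\ge0}\to\{1,\dots,m\}$; a consensus set is one for which, for every switching signal and every $\mathbf{x}(0)$, $\mathbf{x}(t)\to\alpha\mathbf{1}$ for some $\alpha\in\mathbb{R}$. *)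

(* Defs.v *)
From HB Require Import structures.
From mathcomp Require Import all_boot all_order all_algebra.
From mathcomp Require Import all_classical all_reals all_analysis.
From mathcomp.real_closed Require Export mxtens.
Set Implicit Arguments. Unset Strict Implicit. Unset Printing Implicit Defensive.
Import Order.TTheory GRing.Theory Num.Theory numFieldNormedType.Exports.
Local Open Scope ring_scope. Local Open Scope classical_set_scope.

Definition ones (R : realType) (n : nat) : 'cV[R]_n := const_mx 1.

Definition eventually_positive (R : realType) (n : nat) (W : 'M[R]_n) : Prop :=
  exists t0 : nat, forall t : nat, (t0 <= t)%N -> forall i j, 0 < (W ^+ t) i j.

Definition eventually_doubly_stochastic (R : realType) (n : nat) (W : 'M[R]_n) : Prop :=
  eventually_positive W /\ W *m ones R n = ones R n /\ W^T *m ones R n = ones R n.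

Definition pos_def (R : realType) (n : nat) (X : 'M[R]_n) : Prop :=
  X^T = X /\ forall v : 'cV[R]_n, v != 0 -> 0 < (v^T *m X *m v) 0 0.

Definition neg_def (R : realType) (n : nat) (X : 'M[R]_n) : Prop :=
  X^T = X /\ forall v : 'cV[R]_n, v != 0 -> (v^T *m X *m v) 0 0 < 0.

Fixpoint traj (R : realType) (n m : nat) (W : 'I_m -> 'M[R]_n)
  (sigma : nat -> 'I_m) (x0 : 'cV[R]_n) (t : nat) : 'cV[R]_n :=
  match t with
  | O => x0
  | S t' => W (sigma t') *m traj W sigma x0 t'
  end.

Definition consensus_set (R : realType) (n m : nat) (W : 'I_m -> 'M[R]_n) : Prop :=
  forall (sigma : nat -> 'I_m) (x0 : 'cV[R]_n),
    exists alpha : R, forall i : 'I_n,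
      (fun t : nat => traj W sigma x0 t i 0) @ \oo --> alpha.

(* Main.v *)
Require Import Defs.
From HB Require Import structures.
From mathcomp Require Import all_boot all_order all_algebra.
From mathcomp Require Import all_classical all_reals all_analysis.
From mathcomp.real_closed Require Import mxtens.
From mathcomp.algebra_tactics Require Import lra.
Import Order.TTheory GRing.Theory Num.Theory.
Local Open Scope ring_scope.

Section Helpers.
Import numFieldNormedType.Exports.
Local Open Scope classical_set_scope.

Lemma cont_qf (R : realType) d (M : 'M[R]_d) :
  continuous (fun w : 'rV[R]_d => (w *m M *m w^T) 0 0).
Proof.
have -> : (fun w : 'rV[R]_d => (w *m M *m w^T) 0 0) =
   (fun w => \sum_(j <- index_enum 'I_d) ((\sum_(i <- index_enum 'I_d) w 0 i * M i j) * w 0 j)).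
  apply: funext => w; rewrite !mxE; apply: eq_bigr => j _; rewrite !mxE.
  by congr (_ * _).
apply: continuous_big; first exact: add_continuous.
move=> j _ w; apply: continuousM; last exact: coord_continuous.
apply: continuous_big; first exact: add_continuous.
move=> i _ w'; apply: continuousM; first exact: coord_continuous.
exact: cst_continuous.
Qed.

Lemma qfZ (R : realType) d (M : 'M[R]_d) (a : R) (w : 'rV[R]_d) :
  ((a *: w) *m M *m (a *: w)^T) 0 0 = a ^+ 2 * (w *m M *m w^T) 0 0.
Proof. by rewrite linearZ /= -!scalemxAl -scalemxAr !mxE mulrA expr2. Qed.

Lemma sphere_compact (R : realType) d :
  compact [set w : 'rV[R]_d | `|w| = 1].
Proof.
apply: bounded_closed_compact.
  exists 1; split => // M M1 w /= ->; exact: ltW.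
have -> : [set w : 'rV[R]_d | `|w| = 1] = (fun w : 'rV[R]_d => `|w|) @^-1` [set 1] by [].
apply: preimage_closed; last exact: closed_eq.
move=> w _; exact: norm_continuous.
Qed.

Lemma qf_bound (R : realType) d (X Y : 'M[R]_d) : neg_def Y ->
  exists2 c : R, 0 < c & forall v : 'cV[R]_d,
    c * (v^T *m X *m v) 0 0 <= - (v^T *m Y *m v) 0 0.
Proof.
case=> _; case: d X Y => [|d] X Y HY.
  exists 1 => // v; rewrite (flatmx0 v) trmx0 !mul0mx !mxE.
  by rewrite ?big_ord0 mulr0 oppr0.
pose S := [set w : 'rV[R]_d.+1 | `|w| = 1].
pose e : 'rV[R]_d.+1 := const_mx 1.
have e0 : e != 0.
  by apply/eqP => /matrixP /(_ 0 0); rewrite !mxE => /eqP; rewrite oner_eq0.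
have S0 : S !=set0.
  exists (`|e|^-1 *: e); rewrite /S /= mx_normZ ger0_norm ?invr_ge0 //.
  by rewrite mulVf // normr_eq0.
have [a aS amin] := @EVT_min_rV R _ (fun w => - (w *m Y *m w^T) 0 0) S S0
   (sphere_compact _ _) (continuous_subspaceT (fun w => continuousN (@cont_qf _ _ Y w))).
have [b bS bmax] := @EVT_max_rV R _ (fun w => (w *m X *m w^T) 0 0) S S0
   (sphere_compact _ _) (continuous_subspaceT (@cont_qf _ _ X)).
have fa : 0 < - (a *m Y *m a^T) 0 0.
  rewrite oppr_gt0 -{1}(trmxK a); apply: HY.
  move: aS; rewrite inE /S /= => na.
  apply/eqP => /(f_equal trmx); rewrite trmxK trmx0 => a0.
  by move: na; rewrite a0 normr0 => /eqP; rewrite eq_sym oner_eq0.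
have m0 : 0 < Num.max ((b *m X *m b^T) 0 0) 1 by rewrite lt_max ltr01 orbT.
exists (- (a *m Y *m a^T) 0 0 / Num.max ((b *m X *m b^T) 0 0) 1).
  exact: divr_gt0.
move=> v; have [->|v0] := eqVneq v 0.
  by rewrite trmx0 !mul0mx ?mulmx0 !mxE mulr0 oppr0.
move: v0; rewrite -[v]trmxK trmx_eq0; move: (v^T) => w w0.
have nw : 0 < `|w| by rewrite normr_gt0.
have [u uS wu] : exists2 u, u \in S & w = `|w| *: u.
  exists (`|w|^-1 *: w); last by rewrite scalerA divff ?gt_eqF // scale1r.
  rewrite inE /S /= mx_normZ ger0_norm ?invr_ge0 ?ltW //.
  by rewrite mulVf // gt_eqF.
rewrite trmxK wu !qfZ mulrCA -mulrN ler_pM2l ?exprn_gt0 //.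
apply: (@le_trans _ _ (- (a *m Y *m a^T) 0 0 / Num.max ((b *m X *m b^T) 0 0) 1
   * Num.max ((b *m X *m b^T) 0 0) 1)).
  apply: ler_wpM2l; first by rewrite divr_ge0 ?ltW.
  by rewrite le_max bmax.
by rewrite divfK ?gt_eqF //; exact: amin.
Qed.

Section T.
Variable R : comPzRingType.

Lemma ntens_mul m n p k (A : 'M[R]_(m, n)) (B : 'M[R]_(n, p)) :
  (A ^t k) *m (B ^t k) = (A *m B) ^t k.
Proof.
case: k => [|k]; first by rewrite !ntensmx0 mul1mx.
rewrite /ntensmx; elim: k => [|k IH] //=.
by rewrite tensmx_mul IH.
Qed.

Lemma ntens_tr m n k (A : 'M[R]_(m, n)) : (A ^t k)^T = A^T ^t k.
Proof.
case: k => [|k]; first by rewrite !ntensmx0 trmx1.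
rewrite /ntensmx; elim: k => [|k IH] //=.
by rewrite trmx_tens IH.
Qed.

Lemma tens11 m n : (1%:M : 'M[R]_m) *t (1%:M : 'M[R]_n) = 1%:M.
Proof.
apply/matrixP => i j.
case: (mxtens_indexP i) => i0 i1; case: (mxtens_indexP j) => j0 j1.
rewrite tensmxE !mxE (inj_eq (can_inj (@mxtens_indexK _ _))) xpair_eqE.
by rewrite -natrM mulnb.
Qed.

Lemma ntens1 n k : (1%:M : 'M[R]_n) ^t k = 1%:M.
Proof.
case: k => [|k]; first by rewrite !ntensmx0.
rewrite /ntensmx; elim: k => [|k IH] //=.
by rewrite IH tens11.
Qed.

Lemma ord_exp1 k (i j : 'I_(1 ^ k)) : i = j.
Proof.
case: i j => [a Ha] [b Hb]; apply/val_inj => /=.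
by move: Ha Hb; rewrite exp1n !ltnS !leqn0 => /eqP -> /eqP ->.
Qed.

Lemma ntens_11 k (A : 'M[R]_1) i j : (A ^t k) i j = A 0 0 ^+ k.
Proof.
case: k i j => [|k] i j.
  by rewrite ntensmx0 !mxE expr0 (ord_exp1 _ i j) eqxx.
rewrite /ntensmx; elim: k i j => [|k IH] i j /=.
  by rewrite expr1; congr (A _ _); apply: (@ord_exp1 1).
case: (mxtens_indexP i) => i0 i1; case: (mxtens_indexP j) => j0 j1.
by rewrite tensmxE IH [i0]ord1 [j0]ord1 (exprS _ k.+1).
Qed.
End T.

Lemma fin_min (R : realType) m (F : 'I_m -> R) : (forall k, 0 < F k) ->
  exists c : R, [/\ 0 < c, c <= 2^-1 & forall k, c <= F k].
Proof.
move=> Fp.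
suff [c [c0 c2 cF]] : exists c : R, [/\ 0 < c, c <= 2^-1 &
   forall k, k \in index_enum 'I_m -> c <= F k].
  by exists c; split => // k; apply: cF; rewrite mem_index_enum.
elim: (index_enum 'I_m) => [|a s [c [c0 c2 cF]]].
  by exists 2^-1; split => //; rewrite invr_gt0 ltr0n.
exists (Num.min (F a) c); split.
- by rewrite lt_min Fp c0.
- by rewrite ge_min c2 orbT.
- move=> k; rewrite in_cons => /orP [/eqP ->|ks]; first by rewrite ge_min lexx.
  by rewrite ge_min cF ?orbT.
Qed.

Lemma qcol (R : realType) a b (M : 'M[R]_(a, b)) (A : 'M[R]_a) j :
  ((col j M)^T *m A *m col j M) 0 0 = (M^T *m A *m M) j j.
Proof.
rewrite !mxE; apply: eq_bigr => l _; rewrite !mxE; congr (_ * _).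
by apply: eq_bigr => k _; rewrite !mxE.
Qed.

Lemma complete (R : realType) n (Q : 'M[R]_(n, n.+1)) (v : 'cV[R]_n.+1) :
  Q *m Q^T = 1%:M -> Q *m ones R n.+1 = 0 -> (ones R n.+1)^T *m v = 0 ->
  Q^T *m Q *m v = v.
Proof.
move=> QQ Q1 v1.
pose A : 'M[R]_(1 + n, n.+1) := col_mx ((n.+1)%:R^-1 *: (ones R n.+1)^T) Q.
pose B : 'M[R]_(n.+1, 1 + n) := row_mx (ones R n.+1) Q^T.
have AB : A *m B = 1%:M.
  rewrite /A /B mul_col_mx !mul_mx_row -block_mxEv QQ Q1.
  rewrite -!scalemxAl.
  have -> : ((ones R n.+1)^T *m Q^T) = 0 by rewrite -trmx_mul Q1 trmx0.
  rewrite scaler0.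
  have -> : (ones R n.+1)^T *m ones R n.+1 = (n.+1)%:R%:M.
    apply/matrixP => i j; rewrite [i]ord1 [j]ord1 !mxE.
    under eq_bigr do rewrite !mxE mulr1.
    by rewrite sumr_const card_ord.
  rewrite scale_scalar_mx mulVf ?pnatr_eq0 //.
  by rewrite -scalar_mx_block.
have BA : B *m A = 1%:M := mulmx1C AB.
rewrite -{2}[v]mul1mx -BA -[B *m A *m v]mulmxA /A mul_col_mx -scalemxAl v1 scaler0.
by rewrite /B mul_row_col mulmx0 add0r mulmxA.
Qed.
Lemma entryB (R : realType) a b (A B : 'M[R]_(a, b)) i j : (A - B) i j = A i j - B i j.
Proof. by rewrite !mxE. Qed.
Lemma entryN (R : realType) a b (A : 'M[R]_(a, b)) i j : (- A) i j = - A i j.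
Proof. by rewrite !mxE. Qed.

Lemma sq_le (R : realType) a (v : 'cV[R]_a) i : v i 0 ^+ 2 <= (v^T *m v) 0 0.
Proof.
rewrite mxE (bigD1 i) //= mxE -expr2 lerDl sumr_ge0 // => l _.
by rewrite mxE -expr2 sqr_ge0.
Qed.

End Helpers.

Theorem corollary7 (R : realType) (n m r : nat) (W : 'I_m -> 'M[R]_n)
  (Q : 'M[R]_(n.-1, n)) (P : 'M[R]_(n ^ r)) :
  (forall k, eventually_doubly_stochastic (W k)) ->
  Q *m Q^T = 1%:M ->
  Q *m ones R n = 0 ->
  (0 < r)%N ->
  pos_def P ->
  (forall k : 'I_m,
     neg_def ((Q ^t r) *m (W k ^t r)^T *m P *m (W k ^t r) *m (Q ^t r)^T
              - (Q ^t r) *m P *m (Q ^t r)^T)) ->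
  consensus_set W.
Proof.
move=> HW HQ HQ1 r0 HP HN sigma x0.
case: n W Q P HW HQ HQ1 HP HN x0 => [|n] W Q P HW HQ HQ1 HP HN x0.
  by exists 0 => -[].
have o1 : (ones R n.+1)^T *m ones R n.+1 = (n.+1)%:R%:M.
  apply/matrixP => i j; rewrite [i]ord1 [j]ord1 !mxE.
  under eq_bigr do rewrite !mxE mulr1.
  by rewrite sumr_const card_ord.
pose c0 := ((ones R n.+1)^T *m x0) 0 0 / (n.+1)%:R.
pose u t := traj W sigma x0 t - c0 *: ones R n.+1.
have uS t : u t.+1 = W (sigma t) *m u t.
  by rewrite /u /= mulmxBr -scalemxAr (proj1 (proj2 (HW (sigma t)))).
have u1 t : (ones R n.+1)^T *m u t = 0.
  elim: t => [|t IH].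
    rewrite /u /= mulmxBr -scalemxAr o1 scale_scalar_mx /c0 divfK ?pnatr_eq0 //.
    by rewrite -mx11_scalar subrr.
  have HWt := proj2 (proj2 (HW (sigma t))).
  by rewrite uS mulmxA -[_ *m W _]trmxK trmx_mul trmxK HWt.
have uQ t : Q^T *m Q *m u t = u t := @complete _ _ Q (u t) HQ HQ1 (u1 t).
pose G t := u t ^t r.
have GS t : G t.+1 = W (sigma t) ^t r *m G t by rewrite /G uS ntens_mul.
have QG t : (Q ^t r)^T *m (Q ^t r) *m G t = G t.
  by rewrite /G ntens_tr !ntens_mul uQ.
have QGt t : (G t)^T *m (Q ^t r)^T *m (Q ^t r) = (G t)^T.
  by rewrite -{2}QG !trmx_mul trmxK mulmxA.
have j0 : 'I_(1 ^ r) by rewrite exp1n; exact: ord0.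
pose L t := ((G t)^T *m P *m G t) j0 j0.
pose X := Q ^t r *m P *m (Q ^t r)^T.
pose z t := col j0 (Q ^t r *m G t).
have Lq t : ((z t)^T *m X *m z t) 0 0 = L t.
  rewrite qcol /X trmx_mul !mulmxA QGt -!mulmxA.
  by rewrite [(Q ^t r)^T *m (Q ^t r *m G t)]mulmxA QG mulmxA.
pose B k := Q ^t r *m (W k ^t r)^T *m P *m W k ^t r *m (Q ^t r)^T.
have Lq' t : ((z t)^T *m B (sigma t) *m z t) 0 0 = L t.+1.
  rewrite qcol /B /L GS trmx_mul !mulmxA QGt -!mulmxA.
  by rewrite [(Q ^t r)^T *m (Q ^t r *m G t)]mulmxA QG !mulmxA trmx_mul ?mulmxA.
have L0 t : 0 <= L t.
  rewrite /L -qcol; set v := col j0 (G t).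
  have [->|v0] := eqVneq v 0; first by rewrite trmx0 !mul0mx mxE.
  exact/ltW/(proj2 HP).
have hk k : exists c : R, 0 < c /\ forall v : 'cV[R]_(n.+1.-1 ^ r), c * (v^T *m X *m v) 0 0 <= - (v^T *m (B k - X) *m v) 0 0.
  by have [c cp H] := @qf_bound _ _ X _ (HN k); exists c; split.
have [cf Hcf] := choice hk.
have [c [cpos c2 cc]] := @fin_min _ _ cf (fun k => proj1 (Hcf k)).
have step t : L t.+1 <= (1 - c) * L t.
  have [_ H] := Hcf (sigma t); have := H (z t).
  rewrite Lq mulmxBr mulmxBl entryB Lq' Lq => H2.
  have := ler_wpM2r (L0 t) (cc (sigma t)).
  rewrite mulrBl mul1r; lra.
have c1 : c <= 1 by apply: (le_trans c2); rewrite invf_le1 ?ler1n ?ltr0n.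
have rate t : L t <= (1 - c) ^+ t * L 0.
  elim: t => [|t IH]; first by rewrite expr0 mul1r.
  apply: (le_trans (step t)); rewrite exprS -mulrA ler_wpM2l // subr_ge0 //.
have negP : neg_def (- P).
  split; first by rewrite raddfN /= (proj1 HP).
  by move=> v v0; rewrite mulmxN mulNmx entryN oppr_lt0 (proj2 HP).
have [c' c'0 Hc'] := @qf_bound _ _ 1%:M _ negP.
have lowbd t : c' * ((u t)^T *m u t) 0 0 ^+ r <= L t.
  have := Hc' (col j0 (G t)).
  rewrite mulmxN mulNmx entryN opprK !qcol mulmx1 /G ntens_tr ntens_mul ntens_11 => h; by rewrite /L /G ntens_tr.
have ui t i : u t i 0 ^+ 2 <= ((u t)^T *m u t) 0 0 := @sq_le _ _ (u t) i.
exists c0 => i.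
apply/cvgrPdist_lt => eps eps0.
have rho0 : 0 <= 1 - c by rewrite subr_ge0.
have rholt : `|1 - c| < 1 by rewrite ger0_norm //; lra.
have L1 : 0 < L 0 + 1 by have := L0 0; lra.
pose d := c' * (eps ^+ 2) ^+ r / (L 0 + 1).
have d0 : 0 < d by rewrite /d divr_gt0 // mulr_gt0 // !exprn_gt0.
have := (cvgrPdist_lt _ _).1 (cvg_expr rholt) d d0.
move=> Hf; near=> t; have Ht : `|0 - (1 - c) ^+ t| < d by near: t; exact: Hf.
have Hr : (1 - c) ^+ t < d.
  by move: Ht; rewrite sub0r normrN ger0_norm // exprn_ge0.
have ex : traj W sigma x0 t i 0 = u t i 0 + c0.
  by rewrite /u entryB !mxE mulr1 subrK.
rewrite ex.
have -> : c0 - (u t i 0 + c0) = - u t i 0 by lra.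
rewrite normrN.
have h1 : c' * (u t i 0 ^+ 2) ^+ r <= c' * ((u t)^T *m u t) 0 0 ^+ r.
  apply: ler_wpM2l; first exact: ltW.
  apply: lerXn2r; rewrite ?nnegrE ?sqr_ge0 //.
  exact: le_trans (sqr_ge0 _) (ui t i).
have h2 : c' * (u t i 0 ^+ 2) ^+ r < c' * (eps ^+ 2) ^+ r.
  apply: (le_lt_trans h1); apply: (le_lt_trans (lowbd t)); apply: (le_lt_trans (rate t)).
  apply: (@le_lt_trans _ _ ((1 - c) ^+ t * (L 0 + 1))).
    by apply: ler_wpM2l; [exact: exprn_ge0 | rewrite lerDl ler01].
  have -> : c' * (eps ^+ 2) ^+ r = d * (L 0 + 1) by rewrite /d divfK // gt_eqF.
  by rewrite ltr_pM2r.
move: h2; rewrite ltr_pM2l // ltr_pXn2r // ?nnegrE ?sqr_ge0 // ?ltW // => h3.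
rewrite -(@ltr_pXn2r _ 2) // ?nnegrE ?normr_ge0 ?ltW // real_normK ?num_real //.
Unshelve. all: by end_near.
Qed.
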